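(* Let $X$ be a pure simplicial complex, $k\ge0$, $L$ a $k$-dimensional $l$-assignment, and $(\pi_\sigma)_{\sigma\in X(k)}$ any family of permutations of $[l]$. Then $$\mathrm{dist}(L,\mathcal A_l)\le\frac1l\sum_{i=1}^l\mathrm{dist}\big((L^\sigma_{\pi_\sigma(i)})_{\sigma\in X(k)},\mathcal A\big),$$ where $\mathcal A_l$ is the set of agreeing $k$-dimensional $l$-assignments and $\mathcal A$ the set of agreeing $k$-dimensional assignments.
   Context: $X(k)$ = faces with $k+1$ elements; weights $w_X(\sigma)=|\{\tau\in X(d):\sigma\subseteq\tau\}|/(\binom{d+1}{|\sigma|}|X(d)|)$ for $d=\dim X$. A $k$-dimensional assignment is $F=(F^\sigma)_{\sigma\in X(k)}$, $F^\sigma:\sigma\to\{0,1\}$; agreeing if some $g:X(0)\to\{0,1\}$ has $g|_\sigma=F^\sigma$ for all $\sigma$; $\mathrm{dist}(F,F')=\sum_{\sigma:F^\sigma\ne F'^\sigma}w_X(\sigma)$. A $k$-dimensional $l$-assignment is $L=(L^\sigma_i)_{\sigma\in X(k),i\in[l]}$ with $L^\sigma_i:\sigma\to\{0,1\}$; $\mathrm{dist}(L,M)=\sum_\sigma w_X(\sigma)|\{i:L^\sigma_i\neq M^\sigma_i\}|/l$; $L$ is agreeing if there are $g_1,\dots,g_l:X(0)\to\{0,1\}$ and permutations $\rho_\sigma$ of $[l]$ with $L^\sigma_{\rho_\sigma(i)}=g_i|_\sigma$ for all $\sigma,i$. Distance to a set is the minimum. *)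

(* Defs.v *)
From HB Require Import structures.
From mathcomp Require Import all_boot all_order all_algebra all_fingroup.
Set Implicit Arguments. Unset Strict Implicit. Unset Printing Implicit Defensive.
Import Order.TTheory GRing.Theory Num.Theory.
Local Open Scope ring_scope.

Section Defs.
Variable V : finType.

Definition simplicial_complex (X : {set {set V}}) : Prop :=
  forall s t : {set V}, s \in X -> t \subset s -> t \in X.

Definition dimX (X : {set {set V}}) : nat := (\max_(s in X) #|s|).-1.

Definition faces (X : {set {set V}}) (k : nat) : {set {set V}} :=
  [set s in X | #|s| == k.+1].

Definition pure (X : {set {set V}}) : Prop :=
  forall s, s \in X -> exists2 t, t \in faces X (dimX X) & s \subset t.

Variable R : realFieldType.

Definition weight (X : {set {set V}}) (s : {set V}) : R :=
  let d := dimX X in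
  (#|[set t in faces X d | s \subset t]|%:R) /
  ('C(d.+1, #|s|)%:R * (#|faces X d|)%:R).

(* k-dimensional assignment: F sigma v = F^sigma(v) (only values for sigma in X(k), v in sigma matter) *)
Definition assignment := {ffun {set V} -> {ffun V -> bool}}.

Definition differ_at (F G : assignment) (s : {set V}) : bool :=
  [exists v in s, F s v != G s v].

Definition agreeing (X : {set {set V}}) (k : nat) (F : assignment) : bool :=
  [exists g : {ffun V -> bool},
     [forall s in faces X k, forall v in s, F s v == g v]].

Definition dist (X : {set {set V}}) (k : nat) (F G : assignment) : R :=
  \sum_(s in faces X k | differ_at F G s) weight X s.

Definition zero_assignment : assignment := [ffun _ => [ffun _ => false]].

(* dist(F, A) = minimum over agreeing assignments (the set is nonempty:
   it contains zero_assignment, which serves as the initial value). *)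
Definition dist_agreeing (X : {set {set V}}) (k : nat) (F : assignment) : R :=
  \big[Num.min/dist X k F zero_assignment]_(G : assignment | agreeing X k G) dist X k F G.

(* k-dimensional l-assignment: L i sigma v = L^sigma_i(v) *)
Definition lassignment (l : nat) := {ffun 'I_l -> assignment}.

Definition ldist (X : {set {set V}}) (k l : nat) (L M : lassignment l) : R :=
  \sum_(s in faces X k)
     weight X s * ((#|[set i : 'I_l | differ_at (L i) (M i) s]|)%:R / l%:R).

Definition lagreeing (X : {set {set V}}) (k l : nat) (L : lassignment l) : bool :=
  [exists g : {ffun 'I_l -> {ffun V -> bool}},
   exists rho : {ffun {set V} -> {perm 'I_l}},
     [forall s in faces X k, forall i : 'I_l, forall v in s,
        L (rho s i) s v == g i v]].

Definition zero_lassignment (l : nat) : lassignment l := [ffun _ => zero_assignment].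

Definition ldist_agreeing (X : {set {set V}}) (k l : nat) (L : lassignment l) : R :=
  \big[Num.min/ldist X k L (zero_lassignment l)]_(M : lassignment l | lagreeing X k M)
     ldist X k L M.

Definition slice (l : nat) (L : lassignment l) (pi : {ffun {set V} -> {perm 'I_l}}) (i : 'I_l)
  : assignment := [ffun s => L (pi s i) s].

End Defs.

(* Main.v *)
Require Import Defs.
From HB Require Import structures.
From mathcomp Require Import all_boot all_order all_algebra all_fingroup.
Import Order.TTheory GRing.Theory Num.Theory.
Local Open Scope ring_scope.

Lemma bigmin_le_term (R : realFieldType) (I : eqType) (r : seq I) (P : pred I)
  (F : I -> R) (x : R) j : j \in r -> P j ->
  \big[Num.min/x]_(i <- r | P i) F i <= F j.
Proof.
elim: r => // a r IH; rewrite inE big_cons => /orP [/eqP <-|jr] Pj.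
  by rewrite Pj ge_min lexx.
case: (P a); last exact: IH.
by rewrite ge_min IH ?orbT.
Qed.

Lemma bigmin_attained (R : realFieldType) (I : finType) (P : pred I)
  (F : I -> R) (x : R) (Q : R -> Prop) : Q x -> (forall i, P i -> Q (F i)) ->
  Q (\big[Num.min/x]_(i | P i) F i).
Proof.
move=> Qx QF; apply: (big_ind Q) => // a b Qa Qb.
by rewrite /Num.min; case: ifP.
Qed.

Theorem mainTheorem6 (R : realFieldType) (V : finType) (X : {set {set V}})
  (k l : nat) (L : lassignment V l) (pi : {ffun {set V} -> {perm 'I_l}}) :
  simplicial_complex X -> pure X ->
  ldist_agreeing R X k L <=
    (l%:R)^-1 * \sum_(i < l) dist_agreeing R X k (slice L pi i).
Proof.
move=> _ _.
have zA : agreeing X k (zero_assignment V).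
  apply/existsP; exists [ffun _ => false]; apply/forallP => s; apply/implyP => _.
  by apply/forallP => v; apply/implyP => _; rewrite !ffunE.
have: forall i : 'I_l, exists G : assignment V * {ffun V -> bool},
   [forall s in faces X k, forall v in s, G.1 s v == G.2 v] /\
   dist_agreeing R X k (slice L pi i) = dist R X k (slice L pi i) G.1.
  move=> i; rewrite /dist_agreeing.
  apply: (@bigmin_attained _ _ _ _ _ (fun y => exists G : assignment V * {ffun V -> bool},
   [forall s in faces X k, forall v in s, G.1 s v == G.2 v] /\
   y = dist R X k (slice L pi i) G.1)).
    move/existsP: zA => [g hg]; by exists (zero_assignment V, g).
  move=> G /existsP [g hg]; by exists (G, g).
case/fin_all_exists => Gg HG.
pose M : lassignment V l := [ffun j => [ffun s => (Gg ((pi s)^-1%g j)).1 s]].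
have MA : lagreeing X k M.
  apply/existsP; exists [ffun i => (Gg i).2]; apply/existsP; exists pi.
  apply/forallP => s; apply/implyP => hs; apply/forallP => i.
  apply/forallP => v; apply/implyP => hv.
  rewrite !ffunE permK.
  have [/forallP /(_ s) /implyP /(_ hs) /forallP /(_ v) /implyP /(_ hv) // _] := HG i.
apply: (@le_trans _ _ (ldist R X k L M)).
  by apply: bigmin_le_term; rewrite ?mem_index_enum.
rewrite (eq_bigr (fun i => dist R X k (slice L pi i) (Gg i).1)); last first.
  by move=> i _; case: (HG i).
rewrite /ldist /dist mulr_sumr.
have E: forall i : 'I_l, l%:R^-1 * \sum_(s in faces X k | differ_at (slice L pi i) (Gg i).1 s) weight R X s
   = \sum_(s in faces X k) weight R X s * ((differ_at (slice L pi i) (Gg i).1 s)%:R / l%:R).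
  move=> i; rewrite big_mkcondr mulr_sumr; apply: eq_bigr => s _.
  by case: ifP => _; rewrite ?mul1r ?mul0r ?mulr0 // mulrC.
under [X in _ <= X]eq_bigr => i _ do rewrite E.
rewrite (exchange_big_dep (fun s => s \in faces X k)) //=.
rewrite le_eqVlt; apply/orP; left; apply/eqP.
apply: eq_bigr => s hs.
rewrite -mulr_sumr -mulr_suml -natr_sum.
congr (_ * (_ / _)); congr (_%:R).
rewrite -(card_preimset _ (@perm_inj _ (pi s))) -sum1_card !big_mkcond /=.
rewrite [RHS]big_mkcond /=.
apply: eq_bigr => i _; rewrite !inE; rewrite inE in hs; rewrite hs.
have -> : differ_at (L (pi s i)) (M (pi s i)) s = differ_at (slice L pi i) (Gg i).1 s.
  by rewrite /differ_at /slice /M !ffunE permK.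
by case: (differ_at _ _ _).
Qed.
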